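(* Let $(X,T)$ be a minimal dendric subshift over the finite alphabet $\mathcal{A}$. Let $$H=\Big\{\sum_{a\in\mathcal{A}}\sum_{k\in K_a}\alpha(a,k)\,\chi_{T^k([a])}\ :\ K_a\subseteq\mathbb{Z}\text{ finite},\ \alpha(a,k)\in\mathbb{Z}\Big\}\subseteq C(X,\mathbb{Z}).$$ Then for every $v\in\mathcal{L}(X)$, the characteristic function $\chi_{[v]}$ belongs to $H$.
   Context: $T$ is the shift on $\mathcal{A}^{\mathbb Z}$, $(X,T)$ a subshift (closed shift-invariant subset), minimal if it has no nonempty proper closed invariant subset. $\mathcal{L}(X)$ is the set of finite factors of elements of $X$. For $w\in\mathcal{L}(X)$ let $L(w)=\{a: aw\in\mathcal{L}(X)\}$, $R(w)=\{b: wb\in\mathcal{L}(X)\}$, $E(w)=\{(a,b): awb\in\mathcal{L}(X)\}$; the extension graph of $w$ is the bipartite graph on the disjoint union of $L(w)$ and $R(w)$ with edge set $E(w)$. A minimal subshift is dendric if every extension graph (including that of the empty word) is a tree. For a word $v$, $[v]=\{x\in X: x_0\cdots x_{|v|-1}=v\}$; $\chi_A$ denotes the characteristic function of $A\subseteq X$. *)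

(* Defs.v *)
From Stdlib Require Import ClassicalEpsilon.
From mathcomp Require Import all_boot all_order all_algebra.
Set Implicit Arguments. Unset Strict Implicit. Unset Printing Implicit Defensive.
Import Order.TTheory GRing.Theory Num.Theory.
Local Open Scope ring_scope.

Definition config (A : Type) := int -> A.

Definition shift (A : Type) (x : config A) : config A := fun n => x (n + 1).
Definition shiftn (A : Type) (k : int) (x : config A) : config A :=
  fun n => x (n + k).

(* Closedness in the product topology on A^Z (A discrete, finite):
   x is in X as soon as every central window of x is seen in some point of X. *)
Definition closed_cfg (A : Type) (X : config A -> Prop) : Prop :=
  forall x : config A,
    (forall n : nat, exists y, X y /\ forall i : int, - (n%:Z) <= i <= n%:Z -> y i = x i) ->
    X x.

Definition shift_invariant (A : Type) (X : config A -> Prop) : Prop :=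
  forall x, X x <-> X (shift x).

Definition subshift (A : Type) (X : config A -> Prop) : Prop :=
  closed_cfg X /\ shift_invariant X.

Definition minimal_subshift (A : Type) (X : config A -> Prop) : Prop :=
  subshift X /\ (exists x, X x) /\
  forall Y : config A -> Prop,
    (forall x, Y x -> X x) -> closed_cfg Y -> shift_invariant Y ->
    (exists x, Y x) -> forall x, X x -> Y x.

Definition occurs_at (A : eqType) (w : seq A) (x : config A) (i : int) : Prop :=
  forall j : nat, (j < size w)%N -> x (i + j%:Z) = nth (x i) w j.

Definition pbool (P : Prop) : bool :=
  if excluded_middle_informative P then true else false.

Definition language (A : eqType) (X : config A -> Prop) (w : seq A) : Prop :=
  exists x, X x /\ exists i, occurs_at w x i.

(* Extension graph of w: bipartite graph on L(w) (left copy, inl) and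
   R(w) (right copy, inr), with edge set E(w) = {(a,b) : a w b in L(X)}. *)
Definition ext_vertex (A : finType) (X : config A -> Prop) (w : seq A)
  (v : A + A) : Prop :=
  match v with
  | inl a => language X (a :: w)
  | inr b => language X (rcons w b)
  end.

Definition ext_edge (A : finType) (X : config A -> Prop) (w : seq A) : rel (A + A) :=
  fun u v =>
    match u, v with
    | inl a, inr b => pbool (language X (a :: rcons w b))
    | inr b, inl a => pbool (language X (a :: rcons w b))
    | _, _ => false
    end.

(* A finite graph (vertex predicate V, symmetric edge relation e whose edges
   only join vertices of V) is a tree if it is connected and has no cycle. *)
Definition is_tree (T : finType) (V : T -> Prop) (e : rel T) : Prop :=
  (forall u v, V u -> V v -> connect e u v) /\
  (forall c : seq T, ucycle e c -> (size c < 3)%N).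

Definition extension_graph_is_tree (A : finType) (X : config A -> Prop)
  (w : seq A) : Prop :=
  is_tree (ext_vertex X w) (ext_edge X w).

Definition dendric (A : finType) (X : config A -> Prop) : Prop :=
  minimal_subshift X /\
  forall w, language X w -> extension_graph_is_tree X w.

Definition cylinder (A : finType) (X : config A -> Prop) (v : seq A)
  (x : config A) : Prop :=
  X x /\ occurs_at v x 0.

Definition shifted_letter_cyl (A : finType) (X : config A -> Prop) (k : int) (a : A)
  (x : config A) : Prop :=
  exists y, cylinder X [:: a] y /\ x = shiftn k y.

Definition chi (A : Type) (S : config A -> Prop) (x : config A) : int :=
  if excluded_middle_informative (S x) then 1 else 0.

(* The group H of finite integer combinations of chi_{T^k([a])},
   as functions on X (elements of C(X, Z) are compared on X). *)
Definition in_H (A : finType) (X : config A -> Prop) (f : config A -> int) : Prop :=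
  exists (K : A -> seq int) (alpha : A -> int -> int),
    forall x, X x ->
      f x = \sum_(a : A) \sum_(k <- K a) alpha a k * chi (shifted_letter_cyl X k a) x.

(* Main.v *)
Require Import Defs.
From mathcomp Require Import all_boot all_order all_algebra.
From Stdlib Require Import FunctionalExtensionality ClassicalEpsilon.
From mathcomp Require Import zify ring lra.
Set Implicit Arguments. Unset Strict Implicit. Unset Printing Implicit Defensive.
Import Order.TTheory GRing.Theory Num.Theory.
Local Open Scope ring_scope.

Section Aux.
Variable A : finType.
Variable X : config A -> Prop.

Definition G (j : int) (a : A) (x : config A) : int := (x j == a)%:R.

Definition evl (l : seq (int * int * A)) (x : config A) : int :=
  \sum_(t <- l) t.1.1 * G t.1.2 t.2 x.

Definition Hs (f : config A -> int) : Prop :=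
  exists l, forall x, X x -> f x = evl l x.

Lemma Hs_ext f g : Hs f -> (forall x, X x -> g x = f x) -> Hs g.
Proof. by move=> [l Hl] E; exists l => x Xx; rewrite E // Hl. Qed.

Lemma Hs0 : Hs (fun _ => 0).
Proof. by exists [::] => x _; rewrite /evl big_nil. Qed.

Lemma HsD f g : Hs f -> Hs g -> Hs (fun x => f x + g x).
Proof.
move=> [l1 H1] [l2 H2]; exists (l1 ++ l2) => x Xx.
by rewrite /evl big_cat /= H1 // H2.
Qed.

Lemma HsZ c f : Hs f -> Hs (fun x => c * f x).
Proof.
move=> [l H]; exists [seq (c * t.1.1, t.1.2, t.2) | t <- l] => x Xx.
rewrite /evl big_map H // mulr_sumr; apply: eq_bigr => t _ /=.
by rewrite mulrA.
Qed.

Lemma HsB f g : Hs f -> Hs g -> Hs (fun x => f x - g x).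
Proof.
move=> Hf Hg; apply: (Hs_ext (HsD Hf (HsZ (-1) Hg))) => x _.
by rewrite mulN1r.
Qed.

Lemma Hs_sum (I : Type) (r : seq I) (P : pred I) (F : I -> config A -> int) :
  (forall i, Hs (F i)) -> Hs (fun x => \sum_(i <- r | P i) F i x).
Proof.
move=> HF; elim: r => [|i r IH].
  by apply: (Hs_ext Hs0) => x _; rewrite big_nil.
case Pi: (P i).
  by apply: (Hs_ext (HsD (HF i) IH)) => x _; rewrite big_cons Pi.
by apply: (Hs_ext IH) => x _; rewrite big_cons Pi.
Qed.

Lemma HsG j a : Hs (G j a).
Proof. by exists [:: (1, j, a)] => x _; rewrite /evl big_cons big_nil mul1r addr0. Qed.

End Aux.

Lemma shiftn_comp (A : Type) (j k : int) (x : config A) :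
  shiftn j (shiftn k x) = shiftn (j + k) x.
Proof. by apply: functional_extensionality => n; rewrite /shiftn; congr x; ring. Qed.

Lemma shiftn0 (A : Type) (x : config A) : shiftn 0 x = x.
Proof. by apply: functional_extensionality => n; rewrite /shiftn addr0. Qed.

Lemma shiftn_X (A : Type) (X : config A -> Prop) : shift_invariant X ->
  forall k x, X x -> X (shiftn k x).
Proof.
move=> SI k x Xx.
have S1 y : shift y = shiftn 1 y by [].
have pos n : X (shiftn n%:Z x).
  elim: n => [|n IH]; first by rewrite shiftn0.
  have -> : shiftn n.+1%:Z x = shift (shiftn n%:Z x).
    by rewrite S1 shiftn_comp; congr shiftn; lia.
  by move/SI: IH.
case: k => n; first exact: pos.
elim: n => [|n IH].
  apply/SI; rewrite S1 shiftn_comp.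
  by have -> : (1 + Negz 0 = 0 :> int) by []; rewrite shiftn0.
apply/SI; rewrite S1 shiftn_comp.
by have -> : (1 + Negz n.+1 = Negz n :> int) by rewrite !NegzE; lia.
Qed.

Lemma chi_slc (A : finType) (X : config A -> Prop) : shift_invariant X ->
  forall k a x, X x -> chi (shifted_letter_cyl X k a) x = G (- k) a x.
Proof.
move=> SI k a x Xx; rewrite /chi /G.
case: excluded_middle_informative => [H | N] /=.
  case: H => y [[Xy Hy] Ex]; rewrite Ex; have := Hy 0%N isT; rewrite /shiftn /= addr0 addNr => ->.
  by rewrite eqxx.
case: eqP => // E; exfalso; apply: N.
exists (shiftn (- k) x); split; last by rewrite shiftn_comp subrr shiftn0.
split; first exact: shiftn_X.
by case=> // _; rewrite /shiftn /= add0r E.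
Qed.

Lemma Hs_inH (A : finType) (X : config A -> Prop) f :
  shift_invariant X -> Hs X f -> in_H X f.
Proof.
move=> SI [l Hl].
pose K a := undup [seq - t.1.2 | t <- l & t.2 == a].
pose alpha a k := \sum_(t <- l | (t.2 == a) && (- t.1.2 == k)) t.1.1.
exists K, alpha => x Xx; rewrite Hl // /evl.
have E1 a : \sum_(k <- K a) alpha a k * chi (shifted_letter_cyl X k a) x =
    \sum_(t <- l) (if t.2 == a then t.1.1 * G t.1.2 t.2 x else 0).
  transitivity (\sum_(k <- K a) \sum_(t <- l)
      (if (t.2 == a) && (- t.1.2 == k) then t.1.1 * G t.1.2 t.2 x else 0)).
    apply: eq_bigr => k _; rewrite chi_slc // /alpha mulr_suml big_mkcond.
    apply: eq_bigr => t _; case: ifP => // /andP[/eqP <- /eqP <-].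
    by rewrite opprK.
  rewrite exchange_big; apply: eq_big_seq => t tl.
  case: eqP => Ht /=; last by rewrite big1.
  have tK : - t.1.2 \in K a.
    rewrite mem_undup; apply/mapP; exists t => //.
    by rewrite mem_filter Ht eqxx.
  rewrite (bigD1_seq _ tK (undup_uniq _)) /= eqxx big1 ?addr0 // => k.
  by rewrite eq_sym => /negbTE ->.
rewrite (eq_bigr _ (fun a _ => E1 a)).
rewrite exchange_big; apply: eq_bigr => t _.
by rewrite -big_mkcond (big_pred1 t.2) // => a; rewrite eq_sym.
Qed.

Fixpoint occb (A : eqType) (v : seq A) (x : config A) (p : int) : bool :=
  match v with
  | [::] => true
  | a :: v' => (x p == a) && occb v' x (p + 1)
  end.

Lemma occbP (A : eqType) (v : seq A) x p : occb v x p <-> occurs_at v x p.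
Proof.
elim: v p => [|a v IH] p /=; first by split => // _ j.
split.
  case/andP => /eqP xa /IH H [|j] /=; first by rewrite addr0.
  rewrite ltnS => jv; rewrite (set_nth_default (x (p + 1))) // -H //.
  by congr x; lia.
move=> H; apply/andP; split.
  by have := H 0%N isT; rewrite addr0 => ->.
apply/IH => j jv; have := H j.+1 jv; rewrite /= => E.
rewrite (set_nth_default (x p)) // -E; congr x; lia.
Qed.

Lemma occb_rcons (A : eqType) (v : seq A) b x p :
  occb (rcons v b) x p = occb v x p && (x (p + (size v)%:Z) == b).
Proof.
elim: v p => [|a v IH] p /=; first by rewrite addr0 andbT.
rewrite IH andbA; congr (_ && (x _ == b)); lia.
Qed.

Lemma occb_rconsF (A : finType) (v : seq A) b x p :
  occb (rcons v b) x p = occb v x p && (x (p + (size v)%:Z) == b).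
Proof. exact: occb_rcons. Qed.

Lemma no_bridge (T : finType) (e : rel T) u v :
  (forall c, ucycle e c -> (size c < 3)%N) -> e u v -> e v u -> u != v ->
  ~~ connect (fun s t => e s t && ~~(((s == u) && (t == v)) || ((s == v) && (t == u)))) u v.
Proof.
move=> acyc euv evu nuv; apply/negP => /connectP [q pq lq].
move: lq; case/shortenP: pq => p' pp' up' _ lq.
have sub : path e u p'.
  by apply: sub_path pp' => s t /andP[].
have U : ucycle e (u :: p') by rewrite /ucycle up' andbT /= rcons_path sub -lq evu.
have := acyc _ U; clear U; case: p' pp' lq {sub up'} => [|y [|z r]] //=.
  by move=> _ E; rewrite E eqxx in nuv.
by move=> /andP[+ _] E _; rewrite -E /= !eqxx /= andbF.
Qed.

Lemma sum_ind (A : finType) (P : pred A) (y : A) :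
  \sum_(c | P c) ((y == c)%:R : int) = (P y)%:R.
Proof.
rewrite big_mkcond (bigD1 y) //= eqxx big1 ?addr0; first by case: (P y).
by move=> c /negbTE; rewrite eq_sym => ->; case: (P c).
Qed.

Lemma lang_occb (A : finType) (X : config A -> Prop) v x p :
  X x -> occb v x p -> language X v.
Proof. by move=> Xx /occbP H; exists x; split => //; exists p. Qed.

Lemma main (A : finType) (X : config A -> Prop) : dendric X ->
  forall n (v : seq A) p, (size v <= n)%N -> Hs X (fun x => (occb v x p)%:R).
Proof.
move=> D; elim=> [|n IH] v p.
  case: v => // _; apply: (Hs_ext (@Hs_sum _ X _ (index_enum A) predT (fun a => G p a) (fun a => HsG X p a))).
  by move=> x _ /=; rewrite (sum_ind predT (x p)).
case: v => [|a v] /=.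
  move=> _; apply: (Hs_ext (@Hs_sum _ X _ (index_enum A) predT (fun a => G p a) (fun a => HsG X p a))).
  by move=> x _ /=; rewrite (sum_ind predT (x p)).
rewrite ltnS => vn.
case/lastP: v vn => [|w b] vn.
  by apply: (Hs_ext (HsG X p a)) => x _ /=; rewrite andbT.
rewrite size_rcons in vn.
case: (classic (language X (a :: rcons w b))) => L; last first.
  apply: (Hs_ext (Hs0 X)) => x Xx.
  have E : occb (a :: rcons w b) x p = false.
    by apply/negP => E; apply: L; apply: (lang_occb Xx E).
  by move: E => /= ->.
have Lw : language X w.
  move: L; rewrite /language => -[x [Xx [i H]]].
  move/occbP: H => /= /andP [_]; rewrite occb_rconsF => /andP[Hw _].
  exact: (lang_occb Xx Hw).
have [_ acyc] := D.2 w Lw.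
pose e := ext_edge X w.
have eab : e (inl a) (inr b).
  by rewrite /e /= /pbool; case: excluded_middle_informative.
have NB := no_bridge acyc eab eab isT.
set e' := (fun s t => _) in NB.
pose C u := connect e' (inl a) u.
have Hf : Hs X (fun x => \sum_(c | C (inl c)) (occb (c :: w) x p)%:R
                        - \sum_(c | C (inr c)) (occb (rcons w c) x (p + 1))%:R).
  apply: HsB; apply: Hs_sum => c; apply: IH.
    by rewrite /=; lia.
  by rewrite size_rcons; lia.
apply: (Hs_ext Hf) => x Xx /=.
rewrite occb_rconsF.
case: (boolP (occb w x (p + 1))) => Hw; last first.
  rewrite andbF /= big1 => [|c _]; last by rewrite andbF.
  rewrite big1 ?subr0 // => c _.
  have E := occb_rconsF w c x (p+1).
  by rewrite E (negbTE Hw).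
rewrite /= (eq_bigr (fun c => ((x p == c)%:R : int))); last first.
  by move=> c _; rewrite andbT.
rewrite [X in _ - X](eq_bigr (fun c => ((x (p + 1 + (size w)%:Z) == c)%:R : int))); last first.
  move=> c _; have E := occb_rconsF w c x (p+1).
  by rewrite /= E Hw.
rewrite !sum_ind.
set a' := x p; set b' := x (p + 1 + (size w)%:Z).
have ee : e (inl a') (inr b').
  have H : occb (a' :: rcons w b') x p by rewrite /= occb_rconsF Hw !eqxx.
  have := lang_occb Xx H.
  by rewrite /e /= /pbool; case: excluded_middle_informative.
case: (boolP ((a' == a) && (b' == b))) => [/andP[/eqP -> /eqP ->] | N].
  by rewrite /C connect0 (negbTE NB).
have e'1 : e' (inl a') (inr b').
  apply/andP; split; first exact: ee.
  by rewrite /= orbF.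
have e'2 : e' (inr b') (inl a').
  apply/andP; split; first exact: ee.
  by rewrite /= andbC.
have -> : C (inr b') = C (inl a').
  apply/idP/idP => H.
    by apply: connect_trans H (connect1 e'2).
  by apply: connect_trans H (connect1 e'1).
by rewrite subrr.
Qed.

Theorem lemma3p3 (A : finType) (X : config A -> Prop) :
  dendric X ->
  forall v : seq A, language X v -> in_H X (chi (cylinder X v)).
Proof.
move=> D v _; apply: Hs_inH; first by case: D => [[[_ SI] _]].
have M := main D 0 (leqnn (size v)).
apply: (Hs_ext M) => x Xx.
rewrite /chi; case: excluded_middle_informative => [[_ /occbP ->] | N] //=.
by case: (boolP (occb v x 0)) => // /occbP H; exfalso; apply: N.
Qed.
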